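(* Let $k\ge 2$ be a natural number. (i) Let $f(t)=t^k+at^{k-1}-b$ with $a,b\in\mathbb{Z}$ and $b\ne 0$. Then $f$ admits polysmoothness $\phi(k-1)/(k-1)$. (ii) Let $f(t)=at^k-t+b$ with $a,b\in\mathbb{Z}$ and $ab\ne 0$. Then $f$ admits polysmoothness $\phi(k)/k$.
   Context: $\phi$ denotes Euler's totient function. A polynomial $f\in\mathbb{Z}[t]$ of positive degree admits polysmoothness $\theta$ (for a real $\theta\ge 0$) if there exists a non-constant polynomial $g\in\mathbb{Z}[t]$ such that every irreducible factor of $f(g(t))$ has degree at most $\theta\,(\deg f)(\deg g)$. *)

(* Defs.v *)
From mathcomp Require Import all_boot all_order all_algebra.
Set Implicit Arguments. Unset Strict Implicit. Unset Printing Implicit Defensive.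
Import Order.TTheory GRing.Theory Num.Theory.
Local Open Scope ring_scope.

Definition irreducible_Zt (p : {poly int}) : Prop :=
  p != 0 /\ p \isn't a GRing.unit /\
  forall q r : {poly int}, p = q * r -> q \is a GRing.unit \/ r \is a GRing.unit.

(* f admits polysmoothness theta (theta a real >= 0; here rational suffices
   since the thetas in question are rational). *)
Definition admits_polysmoothness (f : {poly int}) (theta : rat) : Prop :=
  exists g : {poly int}, (1 < size g)%N /\
    forall p : {poly int}, irreducible_Zt p -> (exists q : {poly int}, f \Po g = p * q) ->
      ((size p).-1)%:R <= theta * ((size f).-1)%:R * ((size g).-1)%:R.

(* Main.v *)
Require Import Defs.
From mathcomp Require Import all_boot all_order all_algebra.
From mathcomp Require Import all_field zify ring.
Import Order.TTheory GRing.Theory Num.Theory.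
Local Open Scope ring_scope.

Lemma irrZ_irr (p : {poly int}) : irreducible_Zt p -> (1 < size p)%N -> irreducible_poly p.
Proof.
case=> p0 [pnu irr] sp; split=> // q sq qp.
have [r Dp] := dvdpP_int qp.
have q0 : q != 0.
  by apply: contraNneq p0 => q0; move: qp; rewrite q0 dvd0p.
have szq : size (zprimitive q) = size q by rewrite size_zprimitive.
case: (irr _ _ Dp) => [|ru].
  by rewrite poly_unitE szq (negPf sq).
have r0 : r != 0 by apply: contraNneq p0 => r0; rewrite Dp r0 mulr0.
have sr : size r = 1%N by move: ru; rewrite poly_unitE => /andP[/eqP].
have szp : size p = size q.
  rewrite Dp size_mul ?sr ?addn1 // ?szq //.
  by rewrite zprimitive_eq0.
have : map_poly (intr : int -> rat) q %= map_poly intr p.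
  by rewrite -dvdp_size_eqp ?dvdp_rat_int // !size_rat_int_poly szp.
by rewrite /eqp !dvdp_rat_int.
Qed.

Lemma pZtoC_comp (p : {poly int}) :
  map_poly (ratr : rat -> algC) (map_poly (intr : int -> rat) p) = map_poly intr p.
Proof. by rewrite -map_poly_comp; apply: eq_map_poly => x /=; rewrite rmorph_int. Qed.

Lemma key (p D : {poly int}) (z : algC) : irreducible_Zt p -> (1 < size p)%N ->
  D != 0 -> root (map_poly intr p) z -> root (map_poly intr D) z -> (size p <= size D)%N.
Proof.
move=> ip sp D0 rp rD.
have iP := (irreducible_rat_int p).2 (@irrZ_irr p ip sp).
set P := map_poly (intr : int -> rat) p.
set D' := map_poly (intr : int -> rat) D.
have PD : P %| D'.
  case: (irredp_XsubCP iP (dvdp_gcdl P D')) => [g1 | gP].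
    have cop : coprimep P D' by rewrite coprimep_def (eqp_size g1) size_poly1.
    rewrite -(coprimep_map (ratr : rat -> algC)) !pZtoC_comp in cop.
    by move: (coprimep_root cop rp); rewrite (rootP rD) eqxx.
  by rewrite -(eqp_dvdl _ gP) dvdp_gcdr.
have D'0 : D' != 0 by rewrite map_poly_eq0_id0 ?lead_coef_eq0 ?intr_eq0 ?lead_coef_eq0.
by have := dvdp_leq D'0 PD; rewrite !size_rat_int_poly.
Qed.
Lemma totient_dvd_le (d n : nat) : (0 < n)%N -> (d %| n)%N -> (totient d <= totient n)%N.
Proof.
move=> n0 dn.
have d0 : (0 < d)%N by apply: dvdn_gt0 dn.
rewrite !totientE //.
rewrite [X in (_ <= X)%N](bigID (fun p => p \in primes d)) /=.
set F := fun p => (p.-1 * p ^ (logn p n).-1)%N.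
have Fpos : forall p, p \in primes n -> (0 < F p)%N.
  move=> p; rewrite mem_primes => /and3P[pp _ _].
  rewrite /F muln_gt0 expn_gt0 (prime_gt0 pp) /= andbT; have := prime_gt1 pp; lia.
apply: (@leq_trans (\prod_(i <- primes n | i \in primes d) F i)); last first.
  apply: leq_pmulr; rewrite big_seq_cond prodn_cond_gt0 // => p /andP[pn _].
  exact: Fpos.
rewrite -[X in (_ <= X)%N]big_filter.
have pe : perm_eq (primes d) [seq i <- primes n | i \in primes d].
  apply: uniq_perm; first exact: primes_uniq.
    by rewrite filter_uniq // primes_uniq.
  move=> p; rewrite mem_filter; case pd: (p \in primes d) => //=.
  move: pd; rewrite !mem_primes => /and3P[-> _ pd] /=.
  by rewrite n0 (dvdn_trans pd dn).
rewrite (perm_big _ pe) /= big_seq [X in (_ <= X)%N]big_seq.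
apply: leq_prod => p pd.
have pp : prime p by move: pd; rewrite mem_filter => /andP[+ _]; rewrite mem_primes => /and3P[].
rewrite /F leq_mul2l; apply/orP; right.
rewrite leq_pexp2l ?prime_gt0 //.
have := dvdn_leq_log p n0 dn; lia.
Qed.
Lemma finish (f g : {poly int}) (theta : rat) (B : nat) :
  (1 < size g)%N ->
  (B%:R <= theta * ((size f).-1)%:R * ((size g).-1)%:R) ->
  (forall p, irreducible_Zt p -> (1 < size p)%N ->
     (exists q, f \Po g = p * q) -> (size p <= B.+1)%N) ->
  admits_polysmoothness f theta.
Proof.
move=> sg hB H; exists g; split=> // p ip hq.
apply: le_trans hB; rewrite ler_nat.
case: (ltnP 1 (size p)) => sp; last by case: (size p) sp => [|[]].
by have := H p ip sp hq; case: (size p).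
Qed.

Lemma root_of (p q F : {poly int}) : (1 < size p)%N -> F = p * q ->
  exists z : algC, root (map_poly intr p) z /\ root (map_poly intr F) z.
Proof.
move=> sp ->.
have : size (map_poly (intr : int -> algC) p) != 1%N.
  by rewrite size_map_inj_poly ?rmorph0 //; [case: (size p) sp => [|[]] | apply: intr_inj].
case/closed_rootP => z rz; exists z; split=> //.
by rewrite rmorphM /= rootM rz.
Qed.
Lemma part1 (m : nat) (hm : (1 <= m)%N) (a b : int) (b0 : b != 0) :
 admits_polysmoothness ('X^(m.+1) + a%:P * 'X^m - b%:P) ((totient m)%:R / m%:R).
Proof.
set f := _ - _.
set g : {poly int} := b%:P * 'X^m - a%:P.
set h : {poly int} := g * 'X.
have sg : size g = m.+1.
  rewrite /g size_polyDl mul_polyC size_scale ?size_polyXn //.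
  by rewrite size_polyN size_polyC; case: (a != 0) => //=; lia.
have g0 : g != 0 by rewrite -size_poly_gt0 sg.
have sh : size h = m.+2 by rewrite /h size_mulX // sg.
have sf : size f = m.+2.
  rewrite /f -addrA size_polyDl ?size_polyXn //.
  apply: (leq_ltn_trans (size_polyD _ _)); rewrite gtn_max.
  rewrite size_polyN size_polyC mul_polyC (leq_ltn_trans (size_scale_leq _ _)) ?size_polyXn //.
  by case: (b != 0) => /=; lia.
apply: (@finish _ g _ (totient m * m.+1)).
- by rewrite sg.
- rewrite sf sg /= mulrAC divfK ?natrM // pnatr_eq0; lia.
move=> p ip sp [q hq].
have [z [rp rF]] := @root_of p q _ sp hq.
set w := (map_poly (intr : int -> algC) g).[z].
have hw : w = b%:~R * z ^+ m - a%:~R.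
  by rewrite /w /g rmorphB rmorphM /= !map_polyC map_polyXn /= !hornerE.
have bC : (b%:~R : algC) != 0 by rewrite intr_eq0.
have e1 : (z * w) ^+ m = 1.
  move: rF; rewrite /root map_comp_poly horner_comp -/w /f.
  rewrite !rmorphB rmorphD rmorphM /= !map_polyC !map_polyXn /= !hornerE.
  rewrite exprS.
  have -> : w * w ^+ m + a%:~R * w ^+ m - b%:~R = b%:~R * ((z * w) ^+ m - 1).
    by rewrite hw exprMn; ring.
  by rewrite mulf_eq0 (negPf bC) /= subr_eq0 => /eqP.
have [d prim dm] := prim_order_exists hm e1.
pose D := 'Phi_d \Po h.
have D0 : D != 0.
  by rewrite /D comp_poly_eq0 ?sh // monic_neq0 // Cyclotomic_monic.
have rD : root (map_poly intr D) z.
  rewrite /root /D map_comp_poly horner_comp.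
  have hz : (map_poly intr h).[z] = z * w.
    by rewrite /h rmorphM /= map_polyX hornerE hornerX mulrC.
  rewrite hz.
  have -> : map_poly intr 'Phi_d = cyclotomic (z * w) d by exact: Cintr_Cyclotomic.
  by rewrite -/(root _ _) (root_cyclotomic prim).
have := @key p D z ip sp D0 rp rD.
have : ((size D).-1 = totient d * m.+1)%N by rewrite /D size_comp_poly size_Cyclotomic sh.
have := @totient_dvd_le d m hm dm.
have : (0 < size D)%N by rewrite size_poly_gt0.
nia.
Qed.
Lemma part2 (k : nat) (hk : (2 <= k)%N) (a b : int) (ab : a * b != 0) :
  admits_polysmoothness (a%:P * 'X^k - 'X + b%:P) ((totient k)%:R / k%:R).
Proof.
have a0 : a != 0 by apply: contraNneq ab => ->; rewrite mul0r.
have b0 : b != 0 by apply: contraNneq ab => ->; rewrite mulr0.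
set f := _ + _.
set g : {poly int} := a%:P * 'X^k + b%:P.
have sg : size g = k.+1.
  rewrite /g size_polyDl mul_polyC size_scale ?size_polyXn //.
  by rewrite size_polyC; case: (b != 0) => //=; lia.
have sf : size f = k.+1.
  have sa : size (a%:P * 'X^k) = k.+1 by rewrite mul_polyC size_scale ?size_polyXn.
  rewrite /f -addrA size_polyDl sa //.
  rewrite (leq_ltn_trans (size_polyD _ _)) // size_polyN size_polyX size_polyC.
  case: (b != 0) => /=; lia.
apply: (@finish _ g _ (totient k * k)).
- rewrite sg; lia.
- rewrite sf sg /= divfK ?natrM // pnatr_eq0; lia.
move=> p ip sp [q hq].
have [z [rp rF]] := @root_of p q _ sp hq.
set w := (map_poly (intr : int -> algC) g).[z].
have hw : w = a%:~R * z ^+ k + b%:~R.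
  by rewrite /w /g rmorphD rmorphM /= !map_polyC map_polyXn /= !hornerE.
have aC : (a%:~R : algC) != 0 by rewrite intr_eq0.
have bC : (b%:~R : algC) != 0 by rewrite intr_eq0.
have e1 : w ^+ k = z ^+ k.
  move: rF; rewrite /root map_comp_poly horner_comp -/w /f.
  rewrite rmorphD rmorphB rmorphM /= !map_polyC map_polyXn map_polyX /= !hornerE.
  have -> : a%:~R * w ^+ k - w + b%:~R = a%:~R * (w ^+ k - z ^+ k) :> algC.
    by rewrite hw; ring.
  by rewrite mulf_eq0 (negPf aC) /= subr_eq0 => /eqP.
have k0 : (0 < k)%N by lia.
have z0 : z != 0.
  apply/eqP => z0; move: e1; rewrite hw z0 expr0n /=.
  have -> : (k == 0%N) = false by lia.
  rewrite mulr0 add0r; apply/eqP; rewrite expf_eq0 (negPf bC) andbF //.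
set zeta := w / z.
have e2 : zeta ^+ k = 1 by rewrite /zeta expr_div_n e1 divff // expf_neq0.
have [d prim dk] := prim_order_exists k0 e2.
set n := totient d.
pose D : {poly int} := \sum_(i < n.+1) ('Phi_d)`_i *: (g ^+ i * 'X^(n - i)).
have sPhi : size 'Phi_d = n.+1 by rewrite size_Cyclotomic.
have lPhi : ('Phi_d)`_n = 1.
  by have := monicP (Cyclotomic_monic d); rewrite lead_coefE sPhi.
have D0 : D != 0.
  apply/eqP => D0.
  have : D.[0] = b ^+ n.
    rewrite /D horner_sum big_ord_recr /= big1 ?add0r.
      rewrite hornerZ hornerM subnn expr0 hornerC mulr1 horner_exp lPhi mul1r /g !hornerE expr0n.
      have -> : (k == 0%N) = false by lia.
      by rewrite mulr0 add0r.
    move=> i _; rewrite hornerZ hornerM hornerXn expr0n.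
    have -> : (n - i == 0)%N = false by have := ltn_ord i; lia.
    by rewrite mulr0 mulr0.
  rewrite D0 horner0 => /esym/eqP; rewrite expf_eq0 (negPf b0) andbF //.
have sD : (size D <= n * k + 1)%N.
  apply: (leq_trans (size_sum _ _ _)); apply/bigmax_leqP => i _.
  apply: (leq_trans (size_scale_leq _ _)).
  apply: (leq_trans (size_polyMleq _ _)); rewrite size_polyXn.
  have := size_poly_exp_leq g i; rewrite sg /=.
  have := ltn_ord i.
  nia.
have rD : root (map_poly intr D) z.
  rewrite /root /D rmorph_sum horner_sum.
  have hz : w = zeta * z by rewrite /zeta divfK.
  have hP : (map_poly intr 'Phi_d).[zeta] = 0.
    have -> : map_poly intr 'Phi_d = cyclotomic zeta d by exact: Cintr_Cyclotomic.
    by apply/eqP; rewrite -/(root _ _) (root_cyclotomic prim).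
  rewrite (horner_coef_wide _ (_ : size _ <= n.+1)%N) in hP; last first.
    by rewrite size_map_inj_poly ?sPhi //; apply: intr_inj.
  have -> : \sum_(i < n.+1) (map_poly intr (('Phi_d)`_i *: (g ^+ i * 'X^(n - i)))).[z]
     = z ^+ n * \sum_(i < n.+1) (map_poly intr 'Phi_d)`_i * zeta ^+ i.
    rewrite mulr_sumr; apply: eq_bigr => i _.
    rewrite coef_map /= map_polyZ rmorphM rmorphXn /= map_polyXn hornerZ hornerM horner_exp hornerXn -/w.
    rewrite hz exprMn.
    have -> : z ^+ n = z ^+ i * z ^+ (n - i) by rewrite -exprD subnKC // -ltnS ltn_ord.
    ring.
  by rewrite hP mulr0.
have := @key p D z ip sp D0 rp rD.
have := @totient_dvd_le d k k0 dk.
nia.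
Qed.

Theorem theorem1p5 (k : nat) (hk : (2 <= k)%N) :
  (forall a b : int, b != 0 ->
     admits_polysmoothness ('X^k + a%:P * 'X^(k.-1) - b%:P)
       ((totient k.-1)%:R / (k.-1)%:R))
  /\
  (forall a b : int, a * b != 0 ->
     admits_polysmoothness (a%:P * 'X^k - 'X + b%:P)
       ((totient k)%:R / k%:R)).
Proof.
split.
  move=> a b b0; case: k hk => [|m] hk //.
  by apply: part1 => //; lia.
by move=> a b ab; apply: part2.
Qed.
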